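(* Let $0<d<1/2$ and $\mu\in\mathbb{R}$. Let $\{x_t\}$ satisfy Assumption 1 (see context) and, for $t=1,\dots,T$, let $$y_t=\mu+\sum_{j=0}^{t-1}\pi_j(-d)\,x_{t-j}$$ (a type II fractionally integrated process). Equivalently, applying the truncated fractional difference filter gives, for $t=1,\dots,T$, $$\Delta_+^d y_t:=\sum_{j=0}^{t-1}\pi_j(d)\,y_{t-j}=r_t\,\mu+x_t,\qquad r_t=\sum_{j=0}^{t-1}\pi_j(d).$$ Let $\widehat\mu$ be the ordinary least squares estimator of $\mu$ in the regression of $\Delta_+^d y_t$ on $r_t$, i.e. $$\widehat\mu=\frac{\sum_{t=1}^T r_t\,\Delta_+^d y_t}{\sum_{t=1}^T r_t^2}.$$ Then, as $T\to\infty$, $$T^{1-2d}\,\operatorname{Var}(\widehat\mu)\;\longrightarrow\;\frac{\omega_x^2\,(1-2d)\,(\pi d)^2}{\Gamma^2(d+1)\,\sin^2(\pi d)},$$ where $\Gamma$ is the gamma function and $\omega_x^2$ is the long-run variance of $\{x_t\}$.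
   Context: For real $\delta$, the coefficients $\pi_j(\delta)$, $j\ge 0$, are defined by the binomial expansion $(1-z)^{\delta}=\sum_{j=0}^\infty \pi_j(\delta)z^j$, i.e. $\pi_0(\delta)=1$ and $\pi_j(\delta)=\prod_{k=1}^{j}\frac{k-1-\delta}{k}$. Assumption 1: $\{x_t\}$ is a covariance-stationary process $x_t=\sum_{j=0}^\infty c_j\varepsilon_{t-j}$ with $c_0=1$, $\sum_{j=0}^\infty|c_j|<\infty$, $c(1):=\sum_{j=0}^\infty c_j\neq 0$, where $\{\varepsilon_t\}$ is white noise with $E(\varepsilon_t)=0$, $E(\varepsilon_t^2)=\sigma^2>0$ and $E(\varepsilon_t\varepsilon_{t+h})=0$ for $h\ne0$. Its autocovariances are $\gamma_x(h)=E(x_tx_{t+h})$ and its long-run variance is $\omega_x^2=\sigma^2\big(\sum_{j=0}^\infty c_j\big)^2=\sum_{h=-\infty}^\infty\gamma_x(h)\in(0,\infty)$. *)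

(* Defs.v *)
From Stdlib Require Import Reals Lra Lia Arith Factorial.
Open Scope R_scope.

Fixpoint rsum (f : nat -> R) (n : nat) : R :=
  match n with
  | O => 0
  | S k => rsum f k + f k
  end.

(* Binomial coefficients of (1-z)^delta:
   pi_0 = 1, pi_j = prod_{k=1}^j (k-1-delta)/k *)
Fixpoint frac_pi (delta : R) (j : nat) : R :=
  match j with
  | O => 1
  | S k => frac_pi delta k * ((INR k - delta) / INR (S k))
  end.

(* Gauss' product definition of the Gamma function (x > 0):
   Gamma(x) = lim_n n! n^x / (x (x+1) ... (x+n)). *)
Fixpoint rising_prod (x : R) (n : nat) : R :=
  match n with
  | O => x
  | S k => rising_prod x k * (x + INR (S k))
  end.

Definition is_Gamma (x G : R) : Prop :=
  Un_cv (fun n => INR (fact n) * Rpower (INR n) x / rising_prod x n) G.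

(* ---- Second-order model of the random variables ----
   Every random variable that appears is an affine function of
   x_1, ..., x_T: a pair (constant, coefficients a_s of x_s, s = 1..T). *)
Definition affRV := (R * (nat -> R))%type.

Definition rv_add (X Y : affRV) : affRV :=
  (fst X + fst Y, fun s => snd X s + snd Y s).
Definition rv_scale (a : R) (X : affRV) : affRV :=
  (a * fst X, fun s => a * snd X s).
Definition rv_zero : affRV := (0, fun _ => 0).
Fixpoint rv_sum (F : nat -> affRV) (n : nat) : affRV :=
  match n with
  | O => rv_zero
  | S k => rv_add (rv_sum F k) (F k)
  end.

Definition x_rv (t : nat) : affRV :=
  (0, fun s => if Nat.eqb s t then 1 else 0).

(* Autocovariance of x_t = sum_j c_j eps_{t-j}, eps white noise with
   variance sigma2:  gamma(h) = sigma2 * sum_j c_j c_{j+h}, for h >= 0. *)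
Definition is_autocov (c : nat -> R) (sigma2 : R) (gam : nat -> R) : Prop :=
  forall h : nat, infinite_sum (fun j => sigma2 * (c j * c (j + h)%nat)) (gam h).

Definition absdiff (s u : nat) : nat := if Nat.leb s u then (u - s)%nat else (s - u)%nat.

Definition rv_var (gam : nat -> R) (T : nat) (X : affRV) : R :=
  rsum (fun s' => rsum (fun u' =>
     snd X (S s') * snd X (S u') * gam (absdiff (S s') (S u'))) T) T.

Definition y_rv (d mu : R) (t : nat) : affRV :=
  rv_add (mu, fun _ => 0)
         (rv_sum (fun j => rv_scale (frac_pi (-d) j) (x_rv (t - j)%nat)) t).

Definition dy_rv (d mu : R) (t : nat) : affRV :=
  rv_sum (fun j => rv_scale (frac_pi d j) (y_rv d mu (t - j)%nat)) t.

Definition r_t (d : R) (t : nat) : R := rsum (frac_pi d) t.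

Definition muhat (d mu : R) (T : nat) : affRV :=
  rv_scale (/ rsum (fun t' => r_t d (S t') ^ 2) T)
           (rv_sum (fun t' => rv_scale (r_t d (S t')) (dy_rv d mu (S t'))) T).

(* Main.v *)
Require Import Defs.
From Stdlib Require Import Reals Lra Lia Factorial.
From Coquelicot Require Import Coquelicot.
Open Scope R_scope.


Lemma lim_inv_n1 : is_lim_seq (fun n => / (INR n + 1)) 0.
Proof.
  assert (H : is_lim_seq (fun n => INR n + 1) p_infty).
  { apply (is_lim_seq_plus _ _ p_infty 1 p_infty); [apply is_lim_seq_INR | apply is_lim_seq_const | reflexivity]. }
  apply (is_lim_seq_inv _ _ H). discriminate.
Qed.

Lemma lim_by_bound (u : nat -> R) (l C : R) :
  (forall n, Rabs (u n - l) <= C / (INR n + 1)) -> is_lim_seq u l.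
Proof.
  intros H.
  apply (is_lim_seq_le_le (fun n => l - C * / (INR n + 1)) u (fun n => l + C * / (INR n + 1))).
  - intros n. specialize (H n). unfold Rdiv in H. apply Rabs_le_between' in H. lra.
  - replace (Finite l) with (Finite (l - C * 0)) by (f_equal; ring).
    apply (is_lim_seq_minus' (fun _ => l)); [apply is_lim_seq_const|].
    apply (is_lim_seq_scal_l _ C 0). apply lim_inv_n1.
  - replace (Finite l) with (Finite (l + C * 0)) by (f_equal; ring).
    apply (is_lim_seq_plus' (fun _ => l)); [apply is_lim_seq_const|].
    apply (is_lim_seq_scal_l _ C 0). apply lim_inv_n1.
Qed.

Definition Wf (n : nat) (a : R) (t : R) : R := cos (a * t) * cos t ^ n.
Definition WI (n : nat) (a : R) : R := RInt (Wf n a) 0 (PI/2).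

Lemma Wf_cont n a t : continuous (Wf n a) t.
Proof.
  apply (ex_derive_continuous (K:=R_AbsRing) (V:=R_NormedModule)). unfold Wf. auto_derive. auto.
Qed.

Lemma Wf_ex n a u v : ex_RInt (Wf n a) u v.
Proof. apply (ex_RInt_continuous (V:=R_CompleteNormedModule)). intros; apply Wf_cont. Qed.

Lemma WF_deriv (m : nat) (a t : R) :
  is_derive (fun t => (INR m + 2) * cos (a*t) * sin t * cos t ^ (S m) - a * sin (a*t) * cos t ^ (S (S m))) t
   (((INR m + 2)^2 - a^2) * Wf (S (S m)) a t - (INR m + 2) * (INR m + 1) * Wf m a t).
Proof.
  unfold Wf. auto_derive; auto.
  idtac.
  assert (Hs : sin t ^ 2 = 1 - cos t ^ 2) by (rewrite <- (sin2_cos2 t); unfold Rsqr; ring).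
  change (match m with 0%nat => 1 | S _ => INR m + 1 end) with (INR (S m)).
  rewrite S_INR.
  assert (Hs' : sin t * sin t + cos t * cos t - 1 = 0).
  { pose proof (sin2_cos2 t). unfold Rsqr in H. lra. }
  match goal with |- _ = ?R => transitivity (R + (-(INR m + 2)*(INR m + 1)*cos (a*t) * cos t ^ m)*(sin t * sin t + cos t * cos t - 1)) end.
  - simpl. ring.
  - rewrite Hs'. ring.
Qed.

Lemma RInt_lin (f g : R -> R) (p q u v : R) :
  ex_RInt f u v -> ex_RInt g u v ->
  RInt (fun t => p * f t - q * g t) u v = p * RInt f u v - q * RInt g u v.
Proof.
  intros [If Hf] [Ig Hg].
  rewrite (is_RInt_unique f u v If Hf), (is_RInt_unique g u v Ig Hg).
  apply is_RInt_unique.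
  apply (is_RInt_ext (fun t => minus (scal p (f t)) (scal q (g t)))).
  { intros; reflexivity. }
  change (p * If - q * Ig) with (minus (scal p If) (scal q Ig)).
  apply (is_RInt_minus (V:=R_NormedModule)); apply (is_RInt_scal (V:=R_NormedModule)); auto.
Qed.

Lemma WI_rec (m : nat) (a : R) :
  ((INR m + 2)^2 - a^2) * WI (S (S m)) a = (INR m + 2) * (INR m + 1) * WI m a.
Proof.
  apply Rminus_diag_uniq. unfold WI.
  rewrite <- RInt_lin by apply Wf_ex.
  set (F := fun t => (INR m + 2) * cos (a*t) * sin t * cos t ^ (S m) - a * sin (a*t) * cos t ^ (S (S m))).
  assert (H : is_RInt (fun t => ((INR m + 2)^2 - a^2) * Wf (S (S m)) a t - (INR m + 2) * (INR m + 1) * Wf m a t) 0 (PI/2) (minus (F (PI/2)) (F 0))).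
  { apply (is_RInt_derive (V:=R_CompleteNormedModule)).
    - intros; apply WF_deriv.
    - intros. apply (ex_derive_continuous (K:=R_AbsRing) (V:=R_NormedModule)). unfold Wf. auto_derive. auto. }
  rewrite (is_RInt_unique _ _ _ _ H).
  unfold F, minus, plus, opp; simpl. rewrite cos_PI2, !Rmult_0_r, sin_0. ring.
Qed.

Lemma WI_0 (a : R) : a <> 0 -> WI 0 a = sin (a * (PI/2)) / a.
Proof.
  intros Ha. unfold WI.
  apply is_RInt_unique.
  apply (is_RInt_ext (fun t => cos (a*t))).
  { intros; unfold Wf; simpl; ring. }
  replace (sin (a * (PI / 2)) / a) with (minus ((fun t => sin (a*t)/a) (PI/2)) ((fun t => sin (a*t)/a) 0)).
  2:{ unfold minus, plus, opp; simpl. rewrite Rmult_0_r, sin_0. field. auto. }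
  apply (is_RInt_derive (V:=R_CompleteNormedModule) (fun t => sin (a*t)/a)).
  - intros. auto_derive; auto. field. auto.
  - intros. apply (ex_derive_continuous (K:=R_AbsRing) (V:=R_NormedModule)). auto_derive. auto.
Qed.

Lemma WI_0_0 : WI 0 0 = PI/2.
Proof.
  unfold WI. rewrite (RInt_ext _ (fun _ => 1)).
  2:{ intros; unfold Wf; simpl. rewrite Rmult_0_l, cos_0; ring. }
  rewrite RInt_const. unfold scal; simpl; unfold mult; simpl; ring.
Qed.

Lemma sin_ge_third t : 0 <= t <= PI/2 -> t/3 <= sin t.
Proof.
  intros Ht. pose proof PI_4.
  destruct (sin_bound t 0) as [H1 _]; [lra|lra|].
  unfold sin_approx in H1. simpl in H1. unfold sin_term in H1. simpl in H1.
  assert (t * t <= 4) by nra. nra.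
Qed.

Lemma cos_ge_quad y : - PI/2 <= y <= PI/2 -> 1 - y^2/2 <= cos y.
Proof.
  intros Hy. destruct (cos_bound y 0) as [H1 _]; [lra|lra|].
  unfold cos_approx in H1. simpl in H1. unfold cos_term in H1. simpl in H1. lra.
Qed.

Lemma cos_nonneg_02 t : 0 <= t <= PI/2 -> 0 <= cos t.
Proof. intros. apply cos_ge_0; lra. Qed.

Lemma WI_0_rec n : WI (S (S n)) 0 = (INR n + 1) / (INR n + 2) * WI n 0.
Proof.
  pose proof (WI_rec n 0). pose proof (pos_INR n).
  apply (Rmult_eq_reg_l ((INR n + 2)^2 - 0^2)); [|nra].
  rewrite H. field. lra.
Qed.

Lemma WI_even_pos m : 0 < WI (2*m) 0.
Proof.
  induction m.
  - simpl. rewrite WI_0_0. pose proof PI_RGT_0. lra.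
  - replace (2 * S m)%nat with (S (S (2*m))) by lia. rewrite WI_0_rec.
    pose proof (pos_INR (2*m)). apply Rmult_lt_0_compat; auto.
    apply Rdiv_lt_0_compat; lra.
Qed.

Lemma WI_bound n a : 0 <= a <= 1 ->
  0 <= WI n 0 - WI n a <= 9 * a^2 / 2 * (WI n 0 / (INR n + 2)).
Proof.
  intros Ha. pose proof PI_RGT_0 as Hpi.
  assert (E1 : WI n 0 - WI n a = RInt (fun t => 1 * Wf n 0 t - 1 * Wf n a t) 0 (PI/2)).
  { unfold WI. rewrite RInt_lin by apply Wf_ex. ring. }
  assert (E2 : 9 * a^2 / 2 * (WI n 0 / (INR n + 2)) = RInt (fun t => (9*a^2/2) * Wf n 0 t - (9*a^2/2) * Wf (S (S n)) 0 t) 0 (PI/2)).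
  { rewrite RInt_lin by apply Wf_ex. fold (WI n 0). fold (WI (S (S n)) 0). rewrite WI_0_rec.
    pose proof (pos_INR n). field. lra. }
  assert (Hex : forall f g : R -> R, ex_RInt f 0 (PI/2) -> ex_RInt g 0 (PI/2) -> forall p q, ex_RInt (fun t => p * f t - q * g t) 0 (PI/2)).
  { intros f g [If Hf] [Ig Hg] p q. exists (p * If - q * Ig).
    apply (is_RInt_ext (fun t => minus (scal p (f t)) (scal q (g t)))).
    { intros; reflexivity. }
    change (p * If - q * Ig) with (minus (scal p If) (scal q Ig)).
    apply (is_RInt_minus (V:=R_NormedModule)); apply (is_RInt_scal (V:=R_NormedModule)); auto. }
  rewrite E1, E2. split.
  - apply RInt_ge_0; [lra | apply Hex; apply Wf_ex |].
    intros t Ht. unfold Wf. simpl. rewrite Rmult_0_l, cos_0.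
    pose proof (cos_nonneg_02 t ltac:(lra)). pose proof (pow_le _ n H).
    pose proof (COS_bound (a*t)). nra.
  - apply RInt_le; [lra | apply Hex; apply Wf_ex | apply Hex; apply Wf_ex |].
    intros t Ht. unfold Wf. simpl. rewrite Rmult_0_l, cos_0.
    pose proof (cos_nonneg_02 t ltac:(lra)) as Hc. pose proof (pow_le _ n Hc).
    pose proof (cos_ge_quad (a*t) ltac:(split; nra)).
    pose proof (sin_ge_third t ltac:(lra)).
    pose proof (sin2_cos2 t). unfold Rsqr in *.
    assert (t*t <= 9 * (sin t * sin t)) by nra.
    assert (H9 : 1 - cos (a*t) <= 9/2 * a^2 * (sin t * sin t)) by nra.
    apply Rmult_le_compat_r with (r := cos t ^ n) in H9; auto.
    replace (sin t * sin t) with (1 - cos t * cos t) in H9 by lra.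
    lra.
Qed.

Fixpoint Eprod (x : R) (m : nat) : R :=
  match m with O => 1 | S k => Eprod x k * (1 - x^2 / (INR (S k))^2) end.

Lemma WI_ratio_prod x m : 0 < x < 1/2 ->
  WI (2*m) (2*x) / WI (2*m) 0 * Eprod x m = sin (PI * x) / (PI * x).
Proof.
  intros Hx. pose proof PI_RGT_0 as Hpi.
  induction m.
  - simpl. rewrite WI_0_0, WI_0 by lra.
    replace (2 * x * (PI/2)) with (PI * x) by field. field. lra.
  - rewrite <- IHm.
    replace (2 * S m)%nat with (S (S (2*m))) by lia.
    pose proof (WI_rec (2*m) (2*x)) as H1. pose proof (WI_0_rec (2*m)) as H2.
    pose proof (WI_even_pos m) as H3.
    rewrite mult_INR in H1, H2. cbn [Eprod]. rewrite (S_INR m). change (INR 2) with 2 in H1, H2.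
    pose proof (pos_INR m).
    set (M := INR m) in *. set (A := WI (2*m) (2*x)) in *. set (B := WI (2*m) 0) in *.
    assert (HB2 : WI (S (S (2 * m))) 0 = (2*M+1)/(2*M+2) * B) by (rewrite H2; reflexivity).
    assert (HA2 : WI (S (S (2 * m))) (2*x) = (2*M+2)*(2*M+1)/((2*M+2)^2 - (2*x)^2) * A).
    { apply (Rmult_eq_reg_l ((2*M+2)^2 - (2*x)^2)); [|nra]. rewrite H1. field. nra. }
    rewrite HA2, HB2. field. repeat split; nra.
Qed.


Lemma Eprod_lim x : 0 < x < 1/2 -> is_lim_seq (Eprod x) (sin (PI * x) / (PI * x)).
Proof.
  intros Hx.
  set (Rt := fun m => WI (2*m) (2*x) / WI (2*m) 0).
  assert (HR : forall m, 1 - 9 * x^2 / (INR m + 1) <= Rt m <= 1).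
  { intros m. unfold Rt. pose proof (WI_even_pos m) as Hp.
    destruct (WI_bound (2*m) (2*x) ltac:(lra)) as [B1 B2].
    rewrite mult_INR in B2. change (INR 2) with 2 in B2. pose proof (pos_INR m).
    split.
    - apply (Rmult_le_reg_r (WI (2*m) 0)); auto. unfold Rdiv at 2. rewrite Rmult_assoc, Rinv_l, Rmult_1_r by lra.
      assert (9 * (2 * x) ^ 2 / 2 * (WI (2 * m) 0 / (2 * INR m + 2)) = 9 * x^2 / (INR m + 1) * WI (2*m) 0) by (field; lra).
      lra.
    - apply (Rmult_le_reg_r (WI (2*m) 0)); auto. unfold Rdiv. rewrite Rmult_assoc, Rinv_l, Rmult_1_r by lra. lra. }
  assert (HRl : is_lim_seq Rt 1).
  { apply (lim_by_bound _ _ (9 * x^2)). intros m. specialize (HR m).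
    rewrite Rabs_left1 by lra. pose proof (pos_INR m). lra. }
  assert (HS : 0 < sin (PI * x) / (PI * x)).
  { pose proof PI_RGT_0. apply Rdiv_lt_0_compat; [apply sin_gt_0|]; nra. }
  apply (is_lim_seq_ext (fun m => (sin (PI * x) / (PI * x)) / Rt m)).
  { intros m. pose proof (WI_ratio_prod x m Hx) as E. fold (Rt m) in E.
    assert (Rt m <> 0) by (intro Z; rewrite Z in E; lra).
    rewrite <- E. field. auto. }
  pose proof (is_lim_seq_div' _ _ _ _ (is_lim_seq_const (sin (PI * x) / (PI * x))) HRl R1_neq_R0) as H.
  unfold Rdiv at 3 in H. rewrite Rinv_1, Rmult_1_r in H. exact H.
Qed.

Fixpoint pp (d : R) (n : nat) : R :=
  match n with O => 1 | S k => pp d k * ((INR (S k) - d) / INR (S k)) end.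
Fixpoint qp (d : R) (n : nat) : R :=
  match n with O => 1 | S k => qp d k * (INR (S k) / (INR (S k) + d)) end.

Lemma INR_S_pos k : 0 < INR (S k).
Proof. apply lt_0_INR; lia. Qed.

Lemma pp_Eq d n : 0 < d < 1 -> pp d n = Eprod d n * qp d n.
Proof.
  intros Hd. induction n; cbn [pp qp Eprod]. ring.
  rewrite IHn. pose proof (INR_S_pos n). field. lra.
Qed.

Lemma qp_pos d n : 0 < d -> 0 < qp d n.
Proof.
  intros Hd. induction n; cbn [qp]. lra.
  pose proof (INR_S_pos n). apply Rmult_lt_0_compat; auto. apply Rdiv_lt_0_compat; lra.
Qed.

Lemma pp_pos d n : 0 < d < 1 -> 0 < pp d n.
Proof.
  intros Hd. induction n; cbn [pp]. lra.
  pose proof (INR_S_pos n). pose proof (pos_INR n). rewrite S_INR in *.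
  apply Rmult_lt_0_compat; auto. apply Rdiv_lt_0_compat; lra.
Qed.

Lemma pp_le1 d n : 0 < d < 1 -> pp d n <= 1.
Proof.
  intros Hd. induction n; cbn [pp]. lra.
  pose proof (pp_pos d n Hd). pose proof (pos_INR n). rewrite S_INR in *.
  assert (0 <= (INR n + 1 - d) / (INR n + 1) <= 1).
  { split. apply Rcomplements.Rdiv_le_0_compat; lra. apply Rcomplements.Rle_div_l; lra. }
  nra.
Qed.

Lemma pp_decr d n : 0 < d < 1 -> pp d (S n) <= pp d n.
Proof.
  intros Hd. cbn [pp]. pose proof (pp_pos d n Hd). pose proof (pos_INR n). rewrite S_INR in *.
  assert ((INR n + 1 - d) / (INR n + 1) <= 1) by (apply Rcomplements.Rle_div_l; lra).
  nra.
Qed.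

Lemma pp_mono d n m : 0 < d < 1 -> (n <= m)%nat -> pp d m <= pp d n.
Proof.
  intros Hd H. induction H. lra. pose proof (pp_decr d m Hd). lra.
Qed.

Lemma frac_pi_S d n : frac_pi d (S n) = - d / INR (S n) * pp d n.
Proof.
  induction n.
  - simpl. field.
  - change (frac_pi d (S (S n))) with (frac_pi d (S n) * ((INR (S n) - d) / INR (S (S n)))).
    rewrite IHn. change (pp d (S n)) with (pp d n * ((INR (S n) - d) / INR (S n))).
    pose proof (INR_S_pos n). pose proof (INR_S_pos (S n)). field. lra.
Qed.

Lemma r_t_pp d n : r_t d (S n) = pp d n.
Proof.
  unfold r_t. induction n.
  - simpl. ring.
  - change (rsum (frac_pi d) (S (S n))) with (rsum (frac_pi d) (S n) + frac_pi d (S n)).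
    rewrite IHn, frac_pi_S. cbn [pp]. pose proof (INR_S_pos n). field. lra.
Qed.

Lemma qp_rising d n : 0 < d -> qp d n * rising_prod (d + 1) n = INR (fact n) * (d + 1 + INR n).
Proof.
  intros Hd. induction n.
  - simpl. ring.
  - cbn [qp rising_prod]. rewrite fact_simpl, mult_INR.
    transitivity ((qp d n * rising_prod (d + 1) n) * (INR (S n) / (INR (S n) + d)) * (d + 1 + INR (S n))).
    { ring. }
    rewrite IHn. rewrite !S_INR. pose proof (pos_INR n). field. lra.
Qed.

Lemma Rpower_INR_S_mul n d : Rpower (INR (S n)) (d + 1) = Rpower (INR (S n)) d * INR (S n).
Proof. rewrite Rpower_plus, Rpower_1 by apply INR_S_pos. ring. Qed.

Lemma qlim d G : 0 < d < 1/2 -> is_Gamma (d + 1) G ->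
  is_lim_seq (fun n => qp d n * Rpower (INR n) d) G.
Proof.
  intros Hd HG. unfold is_Gamma in HG. apply is_lim_seq_Reals in HG.
  apply is_lim_seq_incr_1 in HG. apply is_lim_seq_incr_1.
  assert (H1 : is_lim_seq (fun n => 1 + (d + 1) * / (INR n + 1)) 1).
  { replace (Finite 1) with (Finite (1 + (d+1) * 0)) by (f_equal; ring).
    apply (is_lim_seq_plus' (fun _ => 1)); [apply is_lim_seq_const|].
    apply (is_lim_seq_scal_l _ (d+1) 0). apply lim_inv_n1. }
  pose proof (is_lim_seq_mult' _ _ _ _ HG H1) as H. rewrite Rmult_1_r in H.
  revert H. apply is_lim_seq_ext. intros n.
  pose proof (qp_rising d (S n) ltac:(lra)) as E.
  pose proof (qp_pos d (S n) ltac:(lra)).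
  pose proof (INR_S_pos n). rewrite S_INR in *. 
  assert (Hf : 0 < INR (fact (S n))) by (apply lt_0_INR, lt_O_fact).
  assert (Hr : rising_prod (d + 1) (S n) = INR (fact (S n)) * (d + 1 + (INR n + 1)) / qp d (S n)).
  { rewrite <- E. field. lra. }
  rewrite Hr. rewrite Rpower_plus, Rpower_1 by lra.
  field. repeat split; lra.
Qed.

Lemma ln_ge_1_inv y : 0 < y -> 1 - / y <= ln y.
Proof.
  intros Hy. pose proof (exp_ineq1_le (ln (/ y))). rewrite exp_ln in H by (apply Rinv_0_lt_compat; auto).
  rewrite ln_Rinv in H by auto. lra.
Qed.

Lemma ln_le_x_1 y : 0 < y -> ln y <= y - 1.
Proof. intros Hy. pose proof (exp_ineq1_le (ln y)). rewrite exp_ln in H by auto. lra. Qed.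

Lemma qv_incr d n : 0 < d < 1/2 ->
  qp d (S n) * Rpower (INR (S n)) d <= qp d (S (S n)) * Rpower (INR (S (S n))) d.
Proof.
  intros Hd. change (qp d (S (S n))) with (qp d (S n) * (INR (S (S n)) / (INR (S (S n)) + d))). pose proof (qp_pos d (S n) ltac:(lra)).
  pose proof (INR_S_pos n). pose proof (INR_S_pos (S n)).
  assert (E : INR (S (S n)) = INR (S n) * (INR (S (S n)) / INR (S n))) by (field; lra).
  rewrite E at 3. rewrite <- Rpower_mult_distr; [|lra|apply Rdiv_lt_0_compat; lra].
  set (y := INR (S (S n)) / INR (S n)).
  assert (Hy : 0 < y) by (apply Rdiv_lt_0_compat; lra).
  assert (Hl : 1 - / y <= ln y) by (apply ln_ge_1_inv; auto).
  assert (Hiy : / y = INR (S n) / INR (S (S n))) by (unfold y; field; lra).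
  assert (Hp : 1 + d * ln y <= Rpower y d) by (unfold Rpower; apply exp_ineq1_le).
  assert (HR : 0 < Rpower (INR (S n)) d) by (unfold Rpower; apply exp_pos).
  rewrite S_INR with (n := S n) in *.
  assert (K : (INR (S n) + 1) / (INR (S n) + 1 + d) * Rpower y d >= 1).
  { rewrite Hiy in Hl.
    assert (1 + d * (1 - INR (S n) / (INR (S n) + 1)) <= Rpower y d) by nra.
    assert (1 + d * (1 - INR (S n) / (INR (S n) + 1)) = (INR (S n) + 1 + d) / (INR (S n) + 1)) by (field; lra).
    apply Rle_ge. apply (Rmult_le_reg_l ((INR (S n) + 1 + d) / (INR (S n) + 1))).
    apply Rdiv_lt_0_compat; lra.
    replace ((INR (S n) + 1 + d) / (INR (S n) + 1) * ((INR (S n) + 1) / (INR (S n) + 1 + d) * Rpower y d)) with (Rpower y d) by (field; lra).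
    lra. }
  set (Q := qp d (S n)) in *. set (P := Rpower (INR (S n)) d) in *.
  assert (0 < Q * P) by (apply Rmult_lt_0_compat; auto).
  transitivity (Q * P * ((INR (S n) + 1) / (INR (S n) + 1 + d) * Rpower y d)).
  - nra.
  - right. ring.
Qed.

Lemma G_pos d G : 0 < d < 1/2 -> is_Gamma (d + 1) G -> 0 < G.
Proof.
  intros Hd HG. pose proof (qlim d G Hd HG) as H.
  apply is_lim_seq_incr_1 in H.
  assert (Hv : forall n, / (1 + d) <= qp d (S n) * Rpower (INR (S n)) d).
  { induction n.
    - cbn [qp]. change (INR 1) with 1. unfold Rpower. rewrite ln_1, Rmult_0_r, exp_0. right. field. lra.
    - pose proof (qv_incr d n Hd). lra. }
  pose proof (is_lim_seq_le _ _ _ _ Hv (is_lim_seq_const (/ (1 + d))) H) as K.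
  simpl in K. assert (0 < / (1 + d)) by (apply Rinv_0_lt_compat; lra). lra.
Qed.

Lemma plim d G : 0 < d < 1/2 -> is_Gamma (d + 1) G ->
  is_lim_seq (fun n => pp d n * Rpower (INR n) d) (sin (PI * d) / (PI * d) * G).
Proof.
  intros Hd HG.
  pose proof (is_lim_seq_mult' _ _ _ _ (Eprod_lim d Hd) (qlim d G Hd HG)) as H.
  revert H. apply is_lim_seq_ext. intros n. rewrite pp_Eq by lra. ring.
Qed.

Lemma stolz (a b : nat -> R) (l : R) :
  (forall n, 0 < b n) -> (forall n, b n < b (S n)) -> is_lim_seq b p_infty ->
  is_lim_seq (fun n => (a (S n) - a n) / (b (S n) - b n)) l ->
  is_lim_seq (fun n => a n / b n) l.
Proof.
  intros Hb Hinc Hinf Hl.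
  apply is_lim_seq_spec in Hl. apply is_lim_seq_spec in Hinf.
  apply is_lim_seq_spec. intros eps.
  assert (He2 : 0 < eps / 2) by (destruct eps; simpl; lra).
  destruct (Hl (mkposreal _ He2)) as [N HN]. simpl in HN.
  assert (Hstep : forall n, (N <= n)%nat -> Rabs ((a (S n) - a n) - l * (b (S n) - b n)) <= eps/2 * (b (S n) - b n)).
  { intros n Hn. specialize (HN n Hn). pose proof (Hinc n).
    replace ((a (S n) - a n) - l * (b (S n) - b n)) with (((a (S n) - a n) / (b (S n) - b n) - l) * (b (S n) - b n)) by (field; lra).
    rewrite Rabs_mult, (Rabs_right (b (S n) - b n)) by lra.
    apply Rmult_le_compat_r; lra. }
  assert (Hacc : forall k, Rabs ((a (N + k)%nat - a N) - l * (b (N + k)%nat - b N)) <= eps/2 * (b (N + k)%nat - b N)).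
  { induction k.
    - rewrite Nat.add_0_r. replace (a N - a N - l * (b N - b N)) with 0 by ring. rewrite Rabs_R0. lra.
    - replace (N + S k)%nat with (S (N + k)) by lia.
      specialize (Hstep (N + k)%nat ltac:(lia)).
      replace (a (S (N + k)) - a N - l * (b (S (N + k)) - b N)) with
        ((a (N + k)%nat - a N - l * (b (N + k)%nat - b N)) + ((a (S (N + k)) - a (N + k)%nat) - l * (b (S (N + k)) - b (N + k)%nat))) by ring.
      eapply Rle_trans; [apply Rabs_triang|]. lra. }
  set (C := Rabs (a N - l * b N)).
  destruct (Hinf (2 * C / eps)) as [N2 HN2].
  exists (N + N2)%nat. intros n Hn.
  destruct (Nat.le_exists_sub N n ltac:(lia)) as [k [Hk _]]. subst n.
  rewrite Nat.add_comm.
  specialize (Hacc k). specialize (HN2 (N + k)%nat ltac:(lia)).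
  pose proof (Hb (N + k)%nat). pose proof (Hb N).
  set (B := b (N + k)%nat) in *. set (A := a (N + k)%nat) in *.
  replace (A / B - l) with ((A - l * B) / B) by (field; lra).
  rewrite Rabs_div by lra. rewrite (Rabs_right B) by lra.
  apply (Rmult_lt_reg_r B); auto. unfold Rdiv. rewrite Rmult_assoc, Rinv_l, Rmult_1_r by lra.
  replace (A - l * B) with ((A - a N - l * (B - b N)) + (a N - l * b N)) by ring.
  eapply Rle_lt_trans; [apply Rabs_triang|]. fold C.
  destruct eps as [e epos]; simpl in *.
  assert (2 * C < e * B).
  { apply (Rmult_lt_reg_r (/ e)). apply Rinv_0_lt_compat; auto.
    replace (e * B * / e) with B by (field; lra). exact HN2. }
  nra.
Qed.


Lemma Rpower_pos x y : 0 < Rpower x y.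
Proof. unfold Rpower. apply exp_pos. Qed.

Lemma rp_diff_lim al : 0 < al < 1 ->
  is_lim_seq (fun n => INR (S n) * (Rpower (1 + / INR (S n)) al - 1)) al.
Proof.
  intros Ha. apply (lim_by_bound _ _ (al + 2 * al^2 / (1 - al))).
  intros n. pose proof (INR_S_pos n) as Hm0. pose proof (pos_INR n).
  rewrite S_INR in *. set (m := INR n + 1) in *.
  assert (Hm1 : 1 <= m) by (unfold m; lra).
  assert (Hx : 0 < 1 + / m) by (pose proof (Rinv_0_lt_compat m Hm0); lra).
  set (y := ln (1 + / m)).
  assert (Hy1 : / (m + 1) <= y).
  { pose proof (ln_ge_1_inv (1 + / m) Hx). fold y in H0.
    replace (1 - / (1 + / m)) with (/ (m + 1)) in H0 by (field; lra). auto. }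
  assert (Hy2 : y <= / m).
  { pose proof (ln_le_x_1 (1 + / m) Hx). fold y in H0. lra. }
  assert (Hy0 : 0 < / (m+1)) by (apply Rinv_0_lt_compat; lra).
  unfold Rpower. fold y.
  assert (L1 : 1 + al * y <= exp (al * y)) by apply exp_ineq1_le.
  assert (Hay : al * y < 1).
  { assert (/ m <= 1) by (rewrite <- Rinv_1; apply Rinv_le_contravar; lra). nra. }
  assert (L2 : exp (al * y) <= / (1 - al * y)).
  { pose proof (exp_ineq1_le (- (al * y))). rewrite exp_Ropp in H0.
    assert (0 < exp (al * y)) by apply exp_pos.
    apply (Rmult_le_reg_r (1 - al*y)); [lra|]. rewrite Rinv_l by lra.
    apply (Rmult_le_reg_r (/ exp (al * y))). apply Rinv_0_lt_compat; auto.
    replace (exp (al * y) * (1 - al * y) * / exp (al * y)) with (1 - al * y) by (field; lra). lra. }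
  assert (Hlow : al - al / (m + 1) <= m * (exp (al * y) - 1)).
  { assert (al * / (m+1) <= al * y) by (apply Rmult_le_compat_l; lra).
    replace (al - al / (m + 1)) with (m * (al * / (m + 1))) by (field; lra). nra. }
  assert (Hup : m * (exp (al * y) - 1) <= al + 2 * al^2 / (1 - al) / (m + 1)).
  { assert (E1 : / (1 - al * y) - 1 = al * y / (1 - al * y)) by (field; lra).
    assert (al * y <= al / m) by (unfold Rdiv; apply Rmult_le_compat_l; lra).
    assert (H2 : m * (al * y / (1 - al * y)) <= m * ((al / m) / (1 - al / m))).
    { assert (al / m < 1) by (apply Rcomplements.Rlt_div_l; lra).
      apply Rmult_le_compat_l; [lra|].
      unfold Rdiv. apply Rmult_le_compat; [nra | left; apply Rinv_0_lt_compat; lra | fold (Rdiv al m); lra | apply Rinv_le_contravar; fold (Rdiv al m); lra]. }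
    replace (m * ((al / m) / (1 - al / m))) with (al + al^2 / (m - al)) in H2 by (field; split; lra).
    assert (al ^ 2 / (m - al) <= 2 * al ^ 2 / (1 - al) / (m + 1)).
    { assert ((1 - al) * (m + 1) / 2 <= m - al) by nra.
      assert (0 < (1 - al) * (m + 1) / 2) by nra.
      replace (2 * al ^ 2 / (1 - al) / (m + 1)) with (al^2 / ((1 - al) * (m + 1) / 2)) by (field; lra).
      unfold Rdiv. apply Rmult_le_compat_l; [nra|]. apply Rinv_le_contravar; lra. }
    nra. }
  apply Rabs_le. split.
  - assert (al / (m+1) <= (al + 2 * al ^ 2 / (1 - al)) / m).
    { assert (0 <= 2 * al^2 / (1 - al)) by (apply Rcomplements.Rdiv_le_0_compat; nra).
      apply (Rle_trans _ (al / m)); [apply Rmult_le_compat_l; [lra | apply Rinv_le_contravar; lra]|].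
      apply Rmult_le_compat_r; [left; apply Rinv_0_lt_compat; lra | lra]. }
    lra.
  - assert (2 * al ^ 2 / (1 - al) / (m + 1) <= (al + 2 * al ^ 2 / (1 - al)) / m).
    { assert (0 <= 2 * al^2 / (1 - al)) by (apply Rcomplements.Rdiv_le_0_compat; nra).
      set (K := 2 * al ^ 2 / (1 - al)) in *.
      apply (Rle_trans _ (K / m)).
      - unfold Rdiv. apply Rmult_le_compat_l; [auto|]. apply Rinv_le_contravar; lra.
      - apply Rmult_le_compat_r; [left; apply Rinv_0_lt_compat; lra | lra]. }
    lra.
Qed.

Lemma Rpower_INR_inf al : 0 < al -> is_lim_seq (fun n => Rpower (INR (S n)) al) p_infty.
Proof.
  intros Ha. apply is_lim_seq_spec. intros M.
  set (K := Rpower (Rabs M + 1) (/ al)).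
  destruct (INR_unbounded K) as [N HN].
  exists N. intros n Hn.
  assert (INR N <= INR (S n)) by (apply le_INR; lia).
  assert (0 < K) by apply Rpower_pos.
  assert (Rpower K al <= Rpower (INR (S n)) al) by (apply Rle_Rpower_l; lra).
  unfold K in H1. rewrite Rpower_mult, Rinv_l, Rpower_1 in H1 by (try lra; pose proof (Rabs_pos M); lra).
  pose proof (Rle_abs M). lra.
Qed.

Lemma S_lim d G : 0 < d < 1/2 -> is_Gamma (d + 1) G ->
  is_lim_seq (fun T => rsum (fun t => r_t d (S t) ^ 2) T / Rpower (INR T) (1 - 2*d))
    ((sin (PI * d) / (PI * d) * G) ^ 2 / (1 - 2*d)).
Proof.
  intros Hd HG. set (al := 1 - 2*d). assert (Hal : 0 < al < 1) by (unfold al; lra).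
  apply is_lim_seq_incr_1.
  apply (stolz (fun n => rsum (fun t => r_t d (S t) ^ 2) (S n)) (fun n => Rpower (INR (S n)) al)).
  - intros; apply Rpower_pos.
  - intros n. apply Rlt_Rpower_l; [lra|]. split; [apply INR_S_pos|]. apply lt_INR. lia.
  - apply Rpower_INR_inf. lra.
  - pose proof (plim d G Hd HG) as Hp0. apply is_lim_seq_incr_1 in Hp0.
    pose proof (is_lim_seq_mult' _ _ _ _ Hp0 Hp0) as Hp2.
    pose proof (is_lim_seq_div' _ _ _ _ Hp2 (rp_diff_lim al Hal) ltac:(lra)) as H.
    replace ((sin (PI * d) / (PI * d) * G) ^ 2) with ((sin (PI * d) / (PI * d) * G) * (sin (PI * d) / (PI * d) * G)) by ring.
    revert H. apply is_lim_seq_ext. intros n.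
    change (rsum (fun t => r_t d (S t) ^ 2) (S (S n))) with (rsum (fun t => r_t d (S t) ^ 2) (S n) + r_t d (S (S n)) ^ 2).
    rewrite r_t_pp.
    pose proof (INR_S_pos n) as Hm. set (m := INR (S n)) in *.
    assert (E1 : INR (S (S n)) = m * (1 + / m)) by (rewrite (S_INR (S n)); fold m; field; lra).
    assert (Hx : 0 < 1 + / m) by (pose proof (Rinv_0_lt_compat m Hm); lra).
    rewrite E1, <- Rpower_mult_distr by lra.
    assert (E2 : Rpower m d * Rpower m d * Rpower m al = m).
    { rewrite <- !Rpower_plus. unfold al. replace (d + d + (1 - 2 * d)) with 1 by ring. apply Rpower_1; auto. }
    assert (HX : 1 < Rpower (1 + / m) al).
    { rewrite <- (Rpower_O (1 + / m)) at 1 by lra. apply Rpower_lt; [|lra].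
      pose proof (Rinv_0_lt_compat m Hm); lra. }
    pose proof (Rpower_pos m al). pose proof (Rpower_pos m d).
    rewrite <- E2 at 3. field. repeat split; try lra. intro Z. assert (Rpower m al * (Rpower (1 + / m) al - 1) > 0) by (apply Rmult_lt_0_compat; lra). lra.
Qed.

Lemma rsum_ext f g n : (forall k, (k < n)%nat -> f k = g k) -> rsum f n = rsum g n.
Proof.
  induction n; intros H; simpl; auto.
  rewrite IHn by (intros; apply H; lia). rewrite H by lia. auto.
Qed.

Lemma rsum_plus f g n : rsum (fun k => f k + g k) n = rsum f n + rsum g n.
Proof. induction n; simpl; [ring | rewrite IHn; ring]. Qed.

Lemma rsum_minus f g n : rsum (fun k => f k - g k) n = rsum f n - rsum g n.
Proof. induction n; simpl; [ring | rewrite IHn; ring]. Qed.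

Lemma rsum_scal c f n : rsum (fun k => c * f k) n = c * rsum f n.
Proof. induction n; simpl; [ring | rewrite IHn; ring]. Qed.

Lemma rsum_zero n : rsum (fun _ => 0) n = 0.
Proof. induction n; simpl; [ring | rewrite IHn; ring]. Qed.

Lemma rsum_S_l f n : rsum f (S n) = f 0%nat + rsum (fun k => f (S k)) n.
Proof. induction n. simpl; ring. change (rsum f (S (S n))) with (rsum f (S n) + f (S n)). rewrite IHn. simpl. ring. Qed.

Lemma rsum_split f n m : rsum f (n + m) = rsum f n + rsum (fun k => f (n + k)%nat) m.
Proof. induction m. rewrite Nat.add_0_r. simpl; ring. rewrite Nat.add_succ_r. simpl. rewrite IHm. ring. Qed.

Lemma rsum_rev f n : rsum f n = rsum (fun k => f (n - 1 - k)%nat) n.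
Proof.
  induction n. reflexivity.
  rewrite (rsum_S_l (fun k => f (S n - 1 - k)%nat)). change (rsum f (S n)) with (rsum f n + f n). rewrite IHn.
  replace (S n - 1 - 0)%nat with n by lia.
  rewrite Rplus_comm. f_equal. apply rsum_ext. intros k Hk. f_equal. lia.
Qed.

Lemma rsum_swap (f : nat -> nat -> R) n m :
  rsum (fun i => rsum (fun j => f i j) m) n = rsum (fun j => rsum (fun i => f i j) n) m.
Proof.
  induction n. simpl. rewrite rsum_zero. auto.
  simpl. rewrite IHn. rewrite <- rsum_plus. auto.
Qed.

Lemma rsum_abs f n : Rabs (rsum f n) <= rsum (fun k => Rabs (f k)) n.
Proof.
  induction n; simpl. rewrite Rabs_R0; lra.
  eapply Rle_trans; [apply Rabs_triang|]. lra.
Qed.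

Lemma rsum_le f g n : (forall k, (k < n)%nat -> f k <= g k) -> rsum f n <= rsum g n.
Proof.
  induction n; intros H; simpl. lra.
  pose proof (IHn ltac:(intros; apply H; lia)). pose proof (H n ltac:(lia)). lra.
Qed.

Lemma rsum_nonneg f n : (forall k, (k < n)%nat -> 0 <= f k) -> 0 <= rsum f n.
Proof. intros H. rewrite <- (rsum_zero n). apply rsum_le. auto. Qed.

Lemma rsum_mono f n m : (forall k, 0 <= f k) -> (n <= m)%nat -> rsum f n <= rsum f m.
Proof.
  intros H Hnm. induction Hnm. lra. simpl. pose proof (H m). lra.
Qed.

Lemma rsum_zero_after f k0 n : (k0 <= n)%nat -> (forall k, (k0 <= k < n)%nat -> f k = 0) -> rsum f n = rsum f k0.
Proof.
  intros Hk H. induction Hk. auto. simpl. rewrite IHHk by (intros; apply H; lia). rewrite H by lia. ring.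
Qed.

Lemma rsum_telescope a n : rsum (fun k => a k - a (S k)) n = a 0%nat - a n.
Proof. induction n; simpl. ring. rewrite IHn. ring. Qed.

Lemma rsum_sum_f_R0 f n : rsum f (S n) = sum_f_R0 f n.
Proof. induction n. simpl; ring. change (rsum f (S (S n))) with (rsum f (S n) + f (S n)). rewrite IHn. simpl. ring. Qed.

Lemma rsum_ind_S f s n : (1 <= s)%nat ->
  rsum (fun k => f k * (if Nat.eqb s (S k) then 1 else 0)) n = if Nat.leb s n then f (s - 1)%nat else 0.
Proof.
  intros Hs. induction n.
  - simpl. destruct s; [lia|reflexivity].
  - simpl rsum. rewrite IHn.
    destruct (Nat.leb s n) eqn:E1; destruct (Nat.eqb s (S n)) eqn:E2; destruct (Nat.leb s (S n)) eqn:E3;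
      apply Nat.leb_le in E1 || apply Nat.leb_gt in E1;
      apply Nat.eqb_eq in E2 || apply Nat.eqb_neq in E2;
      apply Nat.leb_le in E3 || apply Nat.leb_gt in E3; try lia;
    try ring.
    subst s. replace (S n - 1)%nat with n by lia. ring.
Qed.

Lemma snd_rv_sum F n s : snd (rv_sum F n) s = rsum (fun j => snd (F j) s) n.
Proof. induction n; simpl; auto. rewrite IHn. auto. Qed.

Lemma frac_pi_rec dl k : INR (S k) * frac_pi dl (S k) = (INR k - dl) * frac_pi dl k.
Proof. change (frac_pi dl (S k)) with (frac_pi dl k * ((INR k - dl) / INR (S k))). pose proof (lt_0_INR (S k) ltac:(lia)). field. lra. Qed.

Definition conv (d : R) (n : nat) : R := rsum (fun j => frac_pi d j * frac_pi (-d) (n - j)) (S n).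

Lemma conv_rec d n : INR (S n) * conv d (S n) = INR n * conv d n.
Proof.
  unfold conv.
  transitivity (rsum (fun j => INR j * frac_pi d j * frac_pi (-d) (S n - j)) (S (S n))
              + rsum (fun j => frac_pi d j * (INR (S n - j) * frac_pi (-d) (S n - j))) (S (S n))).
  { rewrite <- rsum_plus, <- rsum_scal. apply rsum_ext. intros k Hk.
    rewrite minus_INR by lia. rewrite S_INR. ring. }
  rewrite rsum_S_l. change (INR 0) with 0. rewrite Rmult_0_l, Rmult_0_l, Rplus_0_l.
  change (rsum (fun j => frac_pi d j * (INR (S n - j) * frac_pi (-d) (S n - j))) (S (S n)))
    with (rsum (fun j => frac_pi d j * (INR (S n - j) * frac_pi (-d) (S n - j))) (S n) +
          frac_pi d (S n) * (INR (S n - S n) * frac_pi (-d) (S n - S n))).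
  rewrite Nat.sub_diag. change (INR 0) with 0. rewrite Rmult_0_l, Rmult_0_r, Rplus_0_r.
  rewrite <- rsum_plus, <- rsum_scal. apply rsum_ext. intros k Hk.
  replace (S n - S k)%nat with (n - k)%nat by lia.
  replace (S n - k)%nat with (S (n - k)) by lia.
  rewrite (frac_pi_rec d k), (frac_pi_rec (-d) (n - k)).
  rewrite minus_INR by lia. ring.
Qed.

Lemma conv_0 d : conv d 0 = 1.
Proof. unfold conv. simpl. ring. Qed.

Lemma conv_S d n : conv d (S n) = 0.
Proof.
  induction n.
  - pose proof (conv_rec d 0). simpl INR in H. lra.
  - pose proof (conv_rec d (S n)). rewrite IHn, Rmult_0_r in H.
    pose proof (lt_0_INR (S (S n)) ltac:(lia)). nra.
Qed.

Lemma snd_y d mu m s : (1 <= s)%nat ->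
  snd (y_rv d mu m) s = if Nat.leb s m then frac_pi (-d) (m - s) else 0.
Proof.
  intros Hs. unfold y_rv, rv_add. simpl snd. rewrite snd_rv_sum. rewrite Rplus_0_l.
  rewrite rsum_rev.
  transitivity (rsum (fun k => frac_pi (-d) (m - 1 - k) * (if Nat.eqb s (S k) then 1 else 0)) m).
  { apply rsum_ext. intros k Hk. unfold rv_scale, x_rv. simpl snd.
    replace (m - (m - 1 - k))%nat with (S k) by lia. reflexivity. }
  rewrite rsum_ind_S by auto. destruct (Nat.leb s m) eqn:E; auto.
  apply Nat.leb_le in E. f_equal. lia.
Qed.

Lemma snd_dy d mu t s : (1 <= s)%nat ->
  snd (dy_rv d mu t) s = if Nat.eqb s t then 1 else 0.
Proof.
  intros Hs. unfold dy_rv. rewrite snd_rv_sum.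
  transitivity (rsum (fun j => frac_pi d j * (if Nat.leb s (t - j) then frac_pi (-d) (t - j - s) else 0)) t).
  { apply rsum_ext. intros k Hk. unfold rv_scale. cbn [snd]. rewrite snd_y by auto. reflexivity. }
  destruct (Nat.leb s t) eqn:E.
  - apply Nat.leb_le in E.
    rewrite (rsum_zero_after _ (S (t - s))).
    2:{ lia. }
    2:{ intros k Hk. destruct (Nat.leb s (t - k)) eqn:E2. apply Nat.leb_le in E2; lia. ring. }
    transitivity (conv d (t - s)).
    + unfold conv. apply rsum_ext. intros k Hk.
      destruct (Nat.leb s (t - k)) eqn:E2; [|apply Nat.leb_gt in E2; lia].
      f_equal. f_equal. lia.
    + destruct (t - s)%nat eqn:E3.
      * rewrite conv_0. replace (Nat.eqb s t) with true; auto. symmetry; apply Nat.eqb_eq; lia.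
      * rewrite conv_S. replace (Nat.eqb s t) with false; auto. symmetry; apply Nat.eqb_neq; lia.
  - apply Nat.leb_gt in E. replace (Nat.eqb s t) with false by (symmetry; apply Nat.eqb_neq; lia).
    transitivity (rsum (fun _ => 0) t); [|apply rsum_zero]. apply rsum_ext. intros k Hk.
    destruct (Nat.leb s (t - k)) eqn:E2; [apply Nat.leb_le in E2; lia | ring].
Qed.

Definition SS (d : R) (T : nat) : R := rsum (fun t => r_t d (S t) ^ 2) T.

Lemma snd_muhat d mu T s : (1 <= s)%nat ->
  snd (muhat d mu T) s = / SS d T * (if Nat.leb s T then r_t d s else 0).
Proof.
  intros Hs. unfold muhat, rv_scale. cbn [snd]. fold (SS d T). f_equal.
  rewrite snd_rv_sum.
  transitivity (rsum (fun k => r_t d (S k) * (if Nat.eqb s (S k) then 1 else 0)) T).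
  { apply rsum_ext. intros k Hk. cbn [snd]. rewrite snd_dy by auto. reflexivity. }
  rewrite rsum_ind_S by auto. destruct (Nat.leb s T); auto. f_equal. lia.
Qed.

Definition DS (a g : nat -> R) (T : nat) : R :=
  rsum (fun s => rsum (fun u => a s * a u * g (absdiff s u)) T) T.

Lemma var_muhat d mu gam T :
  rv_var gam T (muhat d mu T) = DS (fun k => r_t d (S k)) gam T / (SS d T)^2.
Proof.
  unfold rv_var, DS. unfold Rdiv. rewrite Rmult_comm, <- rsum_scal. apply rsum_ext. intros s Hs.
  rewrite <- rsum_scal. apply rsum_ext. intros u Hu.
  rewrite !snd_muhat by lia.
  replace (Nat.leb (S s) T) with true by (symmetry; apply Nat.leb_le; lia).
  replace (Nat.leb (S u) T) with true by (symmetry; apply Nat.leb_le; lia).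
  change (absdiff (S s) (S u)) with (absdiff s u).
  destruct (Req_dec (SS d T) 0) as [Z|Z].
  - rewrite Z. replace (0 ^ 2) with 0 by ring. rewrite Rinv_0. ring.
  - field. auto.
Qed.

Definition LL (a g : nat -> R) (T : nat) : R :=
  rsum (fun h => g (S h) * rsum (fun s => a s * a (s + S h)%nat) (T - S h)) T.

Lemma absdiff_lt s T : (s < T)%nat -> absdiff s T = (T - s)%nat /\ absdiff T s = (T - s)%nat.
Proof.
  intros H. unfold absdiff. split.
  - replace (Nat.leb s T) with true by (symmetry; apply Nat.leb_le; lia). auto.
  - replace (Nat.leb T s) with false by (symmetry; apply Nat.leb_gt; lia). auto.
Qed.

Lemma absdiff_0 s : absdiff s s = 0%nat.
Proof. unfold absdiff. rewrite Nat.leb_refl. lia. Qed.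

Lemma DS_decomp a g T : DS a g T = g 0%nat * rsum (fun s => a s ^ 2) T + 2 * LL a g T.
Proof.
  induction T.
  - unfold DS, LL. simpl. ring.
  - assert (E1 : DS a g (S T) = DS a g T + 2 * rsum (fun s => a s * a T * g (T - s)%nat) T + a T ^ 2 * g 0%nat).
    { unfold DS. simpl rsum at 1.
      transitivity (rsum (fun s => rsum (fun u => a s * a u * g (absdiff s u)) T + a s * a T * g (T - s)%nat) T
                    + (rsum (fun u => a T * a u * g (T - u)%nat) T + a T * a T * g 0%nat)).
      { f_equal.
        - apply rsum_ext. intros k Hk. simpl. destruct (absdiff_lt k T Hk) as [-> _]. auto.
        - simpl. rewrite absdiff_0. f_equal. apply rsum_ext. intros k Hk. destruct (absdiff_lt k T Hk) as [_ ->]. auto. }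
      rewrite rsum_plus. 
      replace (rsum (fun u => a T * a u * g (T - u)%nat) T) with (rsum (fun s => a s * a T * g (T - s)%nat) T)
        by (apply rsum_ext; intros; ring).
      ring. }
    assert (E2 : LL a g (S T) = LL a g T + rsum (fun h => g (S h) * (a (T - S h)%nat * a T)) T).
    { unfold LL. simpl rsum at 1. rewrite Nat.sub_diag. simpl rsum at 2. rewrite Rmult_0_r, Rplus_0_r.
      rewrite <- rsum_plus. apply rsum_ext. intros h Hh.
      change (S T - S h)%nat with (T - h)%nat.
      replace (T - h)%nat with (S (T - S h)) by lia. cbn [rsum].
      replace (T - S h + S h)%nat with T by lia. ring. }
    rewrite E1, E2, IHT.
    replace (rsum (fun s => a s * a T * g (T - s)%nat) T) with (rsum (fun h => g (S h) * (a (T - S h)%nat * a T)) T).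
    2:{ rewrite (rsum_rev (fun s => a s * a T * g (T - s)%nat)). apply rsum_ext. intros h Hh.
        replace (T - (T - 1 - h))%nat with (S h) by lia. replace (T - 1 - h)%nat with (T - S h)%nat by lia. ring. }
    simpl rsum. ring.
Qed.

Lemma inf_lim f (l : R) : infinite_sum f l -> is_lim_seq (fun N => rsum f N) l.
Proof.
  intros H. apply is_lim_seq_incr_1. apply is_lim_seq_Reals.
  intros e He. destruct (H e He) as [N HN]. exists N. intros n Hn.
  rewrite rsum_sum_f_R0. apply HN. auto.
Qed.

Lemma lim_rsum_fin (F : nat -> nat -> R) (L : nat -> R) N :
  (forall h, (h < N)%nat -> is_lim_seq (F h) (L h)) ->
  is_lim_seq (fun M => rsum (fun h => F h M) N) (rsum L N).
Proof.
  induction N; intros H.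
  - simpl. apply is_lim_seq_const.
  - simpl. apply is_lim_seq_plus'. apply IHN; intros; apply H; lia. apply H; lia.
Qed.

Lemma lim_le_bound u (l : R) N B : is_lim_seq u l -> (forall M, (N <= M)%nat -> u M <= B) -> l <= B.
Proof.
  intros H HB. apply (is_lim_seq_incr_n _ N) in H.
  pose proof (is_lim_seq_le _ _ _ _ (fun M => HB (M + N)%nat ltac:(lia)) H (is_lim_seq_const B)). simpl in H0. exact H0.
Qed.

Lemma lim_ge_bound u (l : R) N B : is_lim_seq u l -> (forall M, (N <= M)%nat -> B <= u M) -> B <= l.
Proof.
  intros H HB. apply (is_lim_seq_incr_n _ N) in H.
  pose proof (is_lim_seq_le _ _ _ _ (fun M => HB (M + N)%nat ltac:(lia)) (is_lim_seq_const B) H). simpl in H0. exact H0.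
Qed.

Lemma lim_abs_bound u (l : R) N B : is_lim_seq u l -> (forall M, (N <= M)%nat -> Rabs (u M) <= B) -> Rabs l <= B.
Proof.
  intros H HB. apply is_lim_seq_abs in H. simpl in H. eapply lim_le_bound; eauto.
Qed.

Lemma psum_le f (A : R) K : (forall k, 0 <= f k) -> is_lim_seq (fun N => rsum f N) A -> rsum f K <= A.
Proof.
  intros Hf H. apply (lim_ge_bound _ _ K _ H). intros M HM. apply rsum_mono; auto.
Qed.

Lemma tail_ind (c : nat -> R) (A : R) N s K :
  is_lim_seq (fun n => rsum (fun i => Rabs (c i)) n) A ->
  rsum (fun h => if Nat.leb N (s + h) then Rabs (c (s + h)%nat) else 0) K <= A - rsum (fun i => Rabs (c i)) N.
Proof.
  intros HA. set (phi := fun i => if Nat.leb N i then Rabs (c i) else 0).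
  assert (Hphi : forall i, 0 <= phi i) by (intros i; unfold phi; destruct (Nat.leb N i); [apply Rabs_pos | lra]).
  change (rsum (fun h => phi (s + h)%nat) K <= A - rsum (fun i => Rabs (c i)) N).
  assert (E1 : rsum (fun h => phi (s + h)%nat) K = rsum phi (s + K) - rsum phi s) by (rewrite rsum_split; ring).
  assert (E2 : rsum phi (N + (s + K)) = rsum (fun i => Rabs (c i)) (N + (s + K)) - rsum (fun i => Rabs (c i)) N).
  { rewrite (rsum_split phi N (s + K)), (rsum_split (fun i => Rabs (c i)) N (s + K)).
    assert (rsum phi N = 0).
    { transitivity (rsum (fun _ => 0) N); [|apply rsum_zero]. apply rsum_ext. intros k Hk. unfold phi.
      replace (Nat.leb N k) with false by (symmetry; apply Nat.leb_gt; lia). auto. }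
    rewrite H. assert (rsum (fun k => phi (N + k)%nat) (s + K) = rsum (fun k => Rabs (c (N + k)%nat)) (s + K)).
    { apply rsum_ext. intros k Hk. unfold phi. replace (Nat.leb N (N + k)) with true by (symmetry; apply Nat.leb_le; lia). auto. }
    rewrite H0. ring. }
  pose proof (rsum_mono phi s (s + K) Hphi ltac:(lia)).
  pose proof (rsum_mono phi (s + K) (N + (s + K)) Hphi ltac:(lia)).
  pose proof (psum_le (fun i => Rabs (c i)) A (N + (s + K)) (fun k => Rabs_pos (c k)) HA).
  pose proof (rsum_nonneg phi s (fun k _ => Hphi k)).
  lra.
Qed.

Lemma gm_tail (c : nat -> R) h N M : (h <= N)%nat -> (N <= M)%nat ->
  rsum (fun j => c j * c (j + h)%nat) M - rsum (fun j => c j * c (j + h)%nat) (N - h) =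
  rsum (fun j => if Nat.leb N (j + h) then c j * c (j + h)%nat else 0) M.
Proof.
  intros H1 H2.
  assert (E : rsum (fun j => c j * c (j + h)%nat) M =
     rsum (fun j => if Nat.leb N (j + h) then 0 else c j * c (j + h)%nat) M +
     rsum (fun j => if Nat.leb N (j + h) then c j * c (j + h)%nat else 0) M).
  { rewrite <- rsum_plus. apply rsum_ext. intros k _. destruct (Nat.leb N (k + h)); ring. }
  rewrite E. rewrite (rsum_zero_after (fun j => if Nat.leb N (j + h) then 0 else c j * c (j + h)%nat) (N - h)).
  - rewrite (rsum_ext (fun j => if Nat.leb N (j + h) then 0 else c j * c (j + h)%nat) (fun j => c j * c (j + h)%nat) (N - h)).
    + ring.
    + intros k Hk. replace (Nat.leb N (k + h)) with false by (symmetry; apply Nat.leb_gt; lia). auto.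
  - lia.
  - intros k Hk. replace (Nat.leb N (k + h)) with true by (symmetry; apply Nat.leb_le; lia). auto.
Qed.

Lemma W_bound (c : nat -> R) (A : R) N M :
  is_lim_seq (fun n => rsum (fun i => Rabs (c i)) n) A ->
  rsum (fun h => rsum (fun j => if Nat.leb N (j + h) then Rabs (c j) * Rabs (c (j + h)%nat) else 0) M) (S N)
  <= A * (A - rsum (fun i => Rabs (c i)) N).
Proof.
  intros HA. rewrite rsum_swap.
  apply (Rle_trans _ (rsum (fun j => Rabs (c j) * (A - rsum (fun i => Rabs (c i)) N)) M)).
  - apply rsum_le. intros j Hj.
    transitivity (Rabs (c j) * rsum (fun h => if Nat.leb N (j + h) then Rabs (c (j + h)%nat) else 0) (S N)).
    + rewrite <- rsum_scal. right. apply rsum_ext. intros k _. destruct (Nat.leb N (j + k)); ring.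
    + apply Rmult_le_compat_l; [apply Rabs_pos|]. apply tail_ind; auto.
  - rewrite (rsum_ext _ (fun j => (A - rsum (fun i => Rabs (c i)) N) * Rabs (c j))) by (intros; ring).
    rewrite rsum_scal.
    pose proof (psum_le (fun i => Rabs (c i)) A M (fun k => Rabs_pos (c k)) HA).
    pose proof (psum_le (fun i => Rabs (c i)) A N (fun k => Rabs_pos (c k)) HA).
    pose proof (rsum_nonneg (fun i => Rabs (c i)) M (fun k _ => Rabs_pos (c k))).
    nra.
Qed.

Lemma gm_lim (c : nat -> R) sigma2 gam h : 0 < sigma2 -> is_autocov c sigma2 gam ->
  is_lim_seq (fun M => rsum (fun j => c j * c (j + h)%nat) M) (gam h / sigma2).
Proof.
  intros Hs Hg. pose proof (inf_lim _ _ (Hg h)) as H.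
  pose proof (is_lim_seq_scal_l _ (/ sigma2) _ H) as H2. simpl in H2.
  replace (gam h / sigma2) with (/ sigma2 * gam h) by (unfold Rdiv; ring).
  revert H2. apply is_lim_seq_ext. intros M. rewrite rsum_scal. field. lra.
Qed.

Lemma squeeze0 (u b : nat -> R) : (forall n, Rabs (u n) <= b n) -> is_lim_seq b 0 -> is_lim_seq u 0.
Proof.
  intros H Hb. apply (is_lim_seq_le_le (fun n => - b n) u b).
  - intros n. specialize (H n). apply Rabs_le_between in H. lra.
  - replace (Finite 0) with (Finite (- 0)) by (f_equal; ring). apply (is_lim_seq_opp b 0). auto.
  - auto.
Qed.

Lemma omega_lim (c : nat -> R) sigma2 gam c1 :
  0 < sigma2 -> is_autocov c sigma2 gam ->
  (exists l, infinite_sum (fun j => Rabs (c j)) l) -> infinite_sum c c1 ->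
  is_lim_seq (fun N => gam 0%nat + 2 * rsum (fun h => gam (S h)) N) (sigma2 * c1 ^ 2).
Proof.
  intros Hs Hg [A HA] Hc. apply inf_lim in HA. apply inf_lim in Hc.
  set (X := fun N => gam 0%nat / sigma2 + 2 * rsum (fun h => gam (S h) / sigma2) N).
  set (Y := fun N => rsum c N ^ 2).
  set (B := fun N => 2 * (A * (A - rsum (fun i => Rabs (c i)) N))).
  assert (HB : forall N, Rabs (X N - Y N) <= B N).
  { intros N.
    set (Z := fun M => (rsum (fun j => c j * c (j + 0)%nat) M - rsum (fun j => c j * c (j + 0)%nat) (N - 0))
        + 2 * rsum (fun h => rsum (fun j => c j * c (j + S h)%nat) M - rsum (fun j => c j * c (j + S h)%nat) (N - S h)) N).
    assert (HZ : is_lim_seq Z (X N - Y N)).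
    { assert (EY : Y N = rsum (fun j => c j * c (j + 0)%nat) (N - 0) + 2 * rsum (fun h => rsum (fun j => c j * c (j + S h)%nat) (N - S h)) N).
      { unfold Y. transitivity (DS c (fun _ => 1) N).
        - unfold DS. rewrite <- Rsqr_pow2. unfold Rsqr. rewrite <- rsum_scal. 
          rewrite (rsum_ext (fun k => rsum c N * c k) (fun k => rsum (fun u => c k * c u * 1) N)). 
          + reflexivity.
          + intros k _. rewrite Rmult_comm, <- rsum_scal. apply rsum_ext. intros; ring.
        - rewrite DS_decomp. unfold LL. rewrite Nat.sub_0_r. f_equal.
          + rewrite Rmult_1_l. apply rsum_ext. intros k _. rewrite Nat.add_0_r. ring.
          + f_equal. apply rsum_ext. intros. ring. }
      assert (EX : X N - Y N = (gam 0%nat / sigma2 - rsum (fun j => c j * c (j + 0)%nat) (N - 0)) +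
           2 * rsum (fun h => gam (S h) / sigma2 - rsum (fun j => c j * c (j + S h)%nat) (N - S h)) N).
      { rewrite EY. unfold X. rewrite rsum_minus. ring. }
      rewrite EX. unfold Z. apply is_lim_seq_plus'.
      - apply is_lim_seq_minus'; [apply gm_lim; auto | apply is_lim_seq_const].
      - apply (is_lim_seq_scal_l _ 2 (Finite (rsum _ N))).
        apply (lim_rsum_fin (fun h M => rsum (fun j => c j * c (j + S h)%nat) M - rsum (fun j => c j * c (j + S h)%nat) (N - S h))).
        intros h _. apply is_lim_seq_minus'; [apply gm_lim; auto | apply is_lim_seq_const]. }
    apply (lim_abs_bound Z _ N); auto.
    intros M HM. unfold Z.
    set (W := fun h => rsum (fun j => if Nat.leb N (j + h) then Rabs (c j) * Rabs (c (j + h)%nat) else 0) M).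
    assert (HW : forall h, (h <= N)%nat -> Rabs (rsum (fun j => c j * c (j + h)%nat) M - rsum (fun j => c j * c (j + h)%nat) (N - h)) <= W h).
    { intros h Hh. rewrite gm_tail by lia. eapply Rle_trans; [apply rsum_abs|]. apply rsum_le. intros k _.
      destruct (Nat.leb N (k + h)). rewrite Rabs_mult; lra. rewrite Rabs_R0; lra. }
    assert (HW0 : forall h, 0 <= W h).
    { intros h. apply rsum_nonneg. intros k _. destruct (Nat.leb N (k + h)); [apply Rmult_le_pos; apply Rabs_pos | lra]. }
    pose proof (W_bound c A N M HA) as HWB. fold (W 0%nat) in HWB.
    change (rsum (fun h => W h) (S N) <= A * (A - rsum (fun i => Rabs (c i)) N)) in HWB.
    rewrite rsum_S_l in HWB.
    eapply Rle_trans; [apply Rabs_triang|]. rewrite Rabs_mult, (Rabs_right 2) by lra.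
    pose proof (HW 0%nat ltac:(lia)).
    assert (Rabs (rsum (fun h => rsum (fun j => c j * c (j + S h)%nat) M - rsum (fun j => c j * c (j + S h)%nat) (N - S h)) N) <= rsum (fun h => W (S h)) N).
    { eapply Rle_trans; [apply rsum_abs|]. apply rsum_le. intros k Hk. apply HW. lia. }
    unfold B. pose proof (HW0 0%nat). lra. }
  assert (HD : is_lim_seq (fun N => X N - Y N) 0).
  { apply (squeeze0 _ B HB). unfold B.
    replace (Finite 0) with (Finite (2 * (A * (A - A)))) by (f_equal; ring).
    apply (is_lim_seq_scal_l _ 2 (Finite (A * (A - A)))). apply (is_lim_seq_scal_l _ A (Finite (A - A))).
    apply is_lim_seq_minus'; [apply is_lim_seq_const | auto]. }
  assert (HY : is_lim_seq Y (c1 ^ 2)).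
  { unfold Y. replace (c1 ^ 2) with (c1 * c1) by ring.
    apply (is_lim_seq_ext (fun N => rsum c N * rsum c N)); [intros; ring|]. apply is_lim_seq_mult'; auto. }
  pose proof (is_lim_seq_plus' _ _ _ _ HY HD) as HX. rewrite Rplus_0_r in HX.
  pose proof (is_lim_seq_scal_l _ sigma2 _ HX) as H. simpl in H.
  revert H. apply is_lim_seq_ext. intros N. unfold X, Y.
  replace (rsum (fun h => gam (S h)) N) with (rsum (fun k => sigma2 * (gam (S k) / sigma2)) N).
  2:{ apply rsum_ext. intros; field. lra. }
  rewrite (rsum_scal sigma2 (fun k => gam (S k) / sigma2)). field. lra.
Qed.

Lemma gam_abs_sum (c : nat -> R) sigma2 gam :
  0 < sigma2 -> is_autocov c sigma2 gam ->
  (exists l, infinite_sum (fun j => Rabs (c j)) l) ->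
  exists Ag : R, is_lim_seq (fun H => rsum (fun h => Rabs (gam h)) H) Ag.
Proof.
  intros Hs Hg [A HA]. apply inf_lim in HA.
  apply (ex_finite_lim_seq_incr _ (sigma2 * (A * A))).
  - intros n. simpl. pose proof (Rabs_pos (gam n)). lra.
  - intros H.
    assert (Hl : is_lim_seq (fun M => rsum (fun h => Rabs (sigma2 * rsum (fun j => c j * c (j + h)%nat) M)) H) (rsum (fun h => Rabs (gam h)) H)).
    { apply (lim_rsum_fin (fun h M => Rabs (sigma2 * rsum (fun j => c j * c (j + h)%nat) M))).
      intros h _. pose proof (is_lim_seq_abs _ _ (is_lim_seq_scal_l _ sigma2 _ (gm_lim c sigma2 gam h Hs Hg))) as K.
      simpl in K. replace (sigma2 * (gam h / sigma2)) with (gam h) in K by (field; lra). exact K. }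
    apply (lim_le_bound _ _ 0 _ Hl). intros M _.
    apply (Rle_trans _ (sigma2 * rsum (fun h => rsum (fun j => Rabs (c j) * Rabs (c (j + h)%nat)) M) H)).
    { rewrite <- rsum_scal. apply rsum_le. intros h _. rewrite Rabs_mult, (Rabs_right sigma2) by lra.
      apply Rmult_le_compat_l; [lra|]. eapply Rle_trans; [apply rsum_abs|]. apply rsum_le. intros; rewrite Rabs_mult; lra. }
    apply Rmult_le_compat_l; [lra|]. rewrite rsum_swap.
    apply (Rle_trans _ (rsum (fun j => Rabs (c j) * A) M)).
    + apply rsum_le. intros j _.
      apply (Rle_trans _ (Rabs (c j) * rsum (fun h => Rabs (c (j + h)%nat)) H)).
      * right. rewrite <- rsum_scal. reflexivity.
      * apply Rmult_le_compat_l; [apply Rabs_pos|].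
        pose proof (rsum_split (fun i => Rabs (c i)) j H).
        pose proof (psum_le (fun i => Rabs (c i)) A (j + H) (fun k => Rabs_pos (c k)) HA).
        pose proof (rsum_nonneg (fun i => Rabs (c i)) j (fun k _ => Rabs_pos (c k))). lra.
    + rewrite (rsum_ext _ (fun j => A * Rabs (c j))) by (intros; ring). rewrite rsum_scal.
      pose proof (psum_le (fun i => Rabs (c i)) A M (fun k => Rabs_pos (c k)) HA).
      pose proof (psum_le (fun i => Rabs (c i)) A 0 (fun k => Rabs_pos (c k)) HA). simpl in H1.
      nra.
Qed.

Lemma tannery0 (g : nat -> R) (w : nat -> nat -> R) (Ag : R) :
  is_lim_seq (fun H => rsum (fun h => Rabs (g h)) H) Ag ->
  (forall T h, 0 <= w T h <= 1) ->
  (forall h, is_lim_seq (fun T => w T h) 0) ->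
  is_lim_seq (fun T => rsum (fun h => Rabs (g h) * w T h) T) 0.
Proof.
  intros Hg Hw Hp. apply is_lim_seq_spec. intros eps.
  assert (He2 : 0 < eps / 2) by (destruct eps; simpl; lra).
  apply is_lim_seq_spec in Hg. destruct (Hg (mkposreal _ He2)) as [H0 HH0]. simpl in HH0.
  specialize (HH0 H0 (le_n _)).
  assert (Hfin : is_lim_seq (fun T => rsum (fun h => Rabs (g h) * w T h) H0) 0).
  { replace 0 with (rsum (fun _ => 0) H0) by apply rsum_zero.
    apply (lim_rsum_fin (fun h T => Rabs (g h) * w T h)). intros h _.
    replace 0 with (Rabs (g h) * 0) by ring. apply (is_lim_seq_scal_l _ (Rabs (g h)) 0). apply Hp. }
  apply is_lim_seq_spec in Hfin. destruct (Hfin (mkposreal _ He2)) as [N1 HN1]. simpl in HN1.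
  exists (N1 + H0)%nat. intros T HT.
  specialize (HN1 T ltac:(lia)).
  assert (Hnn : forall K, 0 <= rsum (fun h => Rabs (g h) * w T h) K).
  { intros K. apply rsum_nonneg. intros k _. specialize (Hw T k). pose proof (Rabs_pos (g k)). nra. }
  rewrite Rminus_0_r in *. rewrite Rabs_right in * by (apply Rle_ge; apply Hnn).
  assert (E : forall f, rsum f T = rsum f H0 + rsum (fun k => f (H0 + k)%nat) (T - H0)) by (intros f; rewrite <- rsum_split; f_equal; lia). rewrite E.
  assert (rsum (fun k => Rabs (g (H0 + k)%nat) * w T (H0 + k)%nat) (T - H0) <= rsum (fun k => Rabs (g (H0 + k)%nat)) (T - H0)).
  { apply rsum_le. intros k _. specialize (Hw T (H0 + k)%nat). pose proof (Rabs_pos (g (H0 + k)%nat)). nra. }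
  assert (rsum (fun k => Rabs (g (H0 + k)%nat)) (T - H0) <= eps / 2).
  { pose proof (rsum_split (fun h => Rabs (g h)) H0 (T - H0)).
    pose proof (psum_le (fun h => Rabs (g h)) Ag (H0 + (T - H0)) (fun k => Rabs_pos (g k))).
    apply Rabs_lt_between' in HH0.
    assert (Hg' : is_lim_seq (fun H => rsum (fun h => Rabs (g h)) H) Ag) by (apply is_lim_seq_spec; exact Hg).
    specialize (H2 Hg'). lra. }
  lra.
Qed.

Lemma diff_tele (a : nat -> R) m K :
  rsum (fun s => a s - a (s + m)%nat) K = rsum a m - rsum (fun i => a (K + i)%nat) m.
Proof.
  rewrite rsum_minus.
  pose proof (rsum_split a K m). pose proof (rsum_split a m K).
  rewrite Nat.add_comm in H0. rewrite H in H0.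
  rewrite (rsum_ext (fun s => a (s + m)%nat) (fun k => a (m + k)%nat)) by (intros; f_equal; lia).
  lra.
Qed.

Lemma a_mono (a : nat -> R) : (forall k, a (S k) <= a k) -> forall s m, a (s + m)%nat <= a s.
Proof.
  intros H s m. induction m. rewrite Nat.add_0_r; lra. rewrite Nat.add_succ_r. specialize (H (s + m)%nat). lra.
Qed.

Lemma P_bounds (a : nat -> R) T h :
  (forall k, 0 <= a k <= 1) -> (forall k, a (S k) <= a k) ->
  0 <= rsum (fun s => a s * a (s + S h)%nat) (T - S h) /\
  0 <= rsum (fun s => a s ^ 2) T - rsum (fun s => a s * a (s + S h)%nat) (T - S h) <= 2 * INR (S h).
Proof.
  intros Ha Hd. pose proof (a_mono a Hd) as Hm.
  set (K := (T - S h)%nat).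
  assert (ET : rsum (fun s => a s ^ 2) T = rsum (fun s => a s ^ 2) K + rsum (fun i => a (K + i)%nat ^ 2) (T - K)).
  { rewrite <- rsum_split. f_equal. unfold K; lia. }
  assert (H1 : 0 <= rsum (fun s => a s * a (s + S h)%nat) K).
  { apply rsum_nonneg. intros k _. apply Rmult_le_pos; apply Ha. }
  assert (H2 : 0 <= rsum (fun i => a (K + i)%nat ^ 2) (T - K)).
  { apply rsum_nonneg. intros k _. apply pow2_ge_0. }
  assert (H3 : rsum (fun i => a (K + i)%nat ^ 2) (T - K) <= INR (T - K)).
  { apply (Rle_trans _ (rsum (fun _ => 1) (T - K))).
    - apply rsum_le. intros k _. specialize (Ha (K + k)%nat). nra.
    - right. clear. induction (T - K)%nat. reflexivity. rewrite S_INR. simpl. lra. }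
  assert (H4 : INR (T - K) <= INR (S h)) by (apply le_INR; unfold K; lia).
  assert (H5 : 0 <= rsum (fun s => a s ^ 2) K - rsum (fun s => a s * a (s + S h)%nat) K <= rsum (fun s => a s - a (s + S h)%nat) K).
  { rewrite <- rsum_minus. split.
    - apply rsum_nonneg. intros k _. pose proof (Hm k (S h)). pose proof (Ha (k + S h)%nat). pose proof (Ha k). nra.
    - apply rsum_le. intros k _. pose proof (Hm k (S h)). pose proof (Ha (k + S h)%nat). pose proof (Ha k). nra. }
  rewrite diff_tele in H5.
  assert (H6 : rsum a (S h) <= INR (S h)).
  { apply (Rle_trans _ (rsum (fun _ => 1) (S h))).
    - apply rsum_le. intros k _. apply Ha.
    - right. clear. induction (S h). reflexivity. rewrite S_INR. simpl. lra. }
  assert (H7 : 0 <= rsum (fun i => a (K + i)%nat) (S h)) by (apply rsum_nonneg; intros; apply Ha).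
  fold K. split; [auto|]. rewrite ET. split; lra.
Qed.

Lemma QS_lim (a gam : nat -> R) (Om Ag : R) :
  (forall k, 0 <= a k <= 1) -> (forall k, a (S k) <= a k) ->
  (forall n, 0 < rsum (fun s => a s ^ 2) (S n)) ->
  is_lim_seq (fun n => / rsum (fun s => a s ^ 2) (S n)) 0 ->
  is_lim_seq (fun H => rsum (fun h => Rabs (gam h)) H) Ag ->
  is_lim_seq (fun N => gam 0%nat + 2 * rsum (fun h => gam (S h)) N) Om ->
  is_lim_seq (fun n => DS a gam (S n) / rsum (fun s => a s ^ 2) (S n)) Om.
Proof.
  intros Ha Hd Hpos Hinv Hg HOm.
  set (S_ := fun n => rsum (fun s => a s ^ 2) (S n)).
  set (P := fun n h => rsum (fun s => a s * a (s + S h)%nat) (S n - S h)).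
  set (w := fun T h => (S_ (pred T) - P (pred T) h) / S_ (pred T)).
  assert (Hw : forall T h, 0 <= w T h <= 1).
  { intros T h. unfold w. destruct (P_bounds a (S (pred T)) h Ha Hd) as [B1 [B2 B3]].
    fold (S_ (pred T)) in B2, B3. fold (P (pred T) h) in B1, B2, B3. pose proof (Hpos (pred T)). fold (S_ (pred T)) in H.
    split.
    - apply Rcomplements.Rdiv_le_0_compat; lra.
    - apply Rcomplements.Rle_div_l; lra. }
  assert (Hwp : forall h, is_lim_seq (fun T => w T h) 0).
  { intros h. apply is_lim_seq_incr_1. simpl.
    apply (squeeze0 _ (fun n => 2 * INR (S h) * / S_ n)).
    - intros n. destruct (P_bounds a (S n) h Ha Hd) as [B1 [B2 B3]]. fold (S_ n) in B2, B3. fold (P n h) in B1, B2, B3.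
      pose proof (Hpos n). fold (S_ n) in H. unfold w; simpl pred.
      rewrite Rabs_right by (apply Rle_ge, Rcomplements.Rdiv_le_0_compat; lra).
      unfold Rdiv. apply Rmult_le_compat_r; [left; apply Rinv_0_lt_compat; auto | lra].
    - replace (Finite 0) with (Finite (2 * INR (S h) * 0)) by (f_equal; ring).
      apply (is_lim_seq_scal_l _ (2 * INR (S h)) 0). exact Hinv. }
  assert (Hg1 : is_lim_seq (fun H => rsum (fun h => Rabs (gam (S h))) H) (Ag - Rabs (gam 0%nat))).
  { apply is_lim_seq_incr_1 in Hg.
    apply (is_lim_seq_ext (fun H => rsum (fun h => Rabs (gam h)) (S H) - Rabs (gam 0%nat))).
    { intros H. rewrite rsum_S_l. ring. }
    apply is_lim_seq_minus'; auto. apply is_lim_seq_const. }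
  pose proof (tannery0 (fun h => gam (S h)) w _ Hg1 Hw Hwp) as HT.
  apply is_lim_seq_incr_1 in HT. simpl in HT.
  assert (Herr : is_lim_seq (fun n => DS a gam (S n) / S_ n - (gam 0%nat + 2 * rsum (fun h => gam (S h)) (S n))) 0).
  { apply (squeeze0 _ (fun n => 2 * rsum (fun h => Rabs (gam (S h)) * w (S n) h) (S n))).
    - intros n. rewrite DS_decomp. fold (S_ n). unfold LL. pose proof (Hpos n) as Hp. fold (S_ n) in Hp.
      replace (((gam 0%nat * S_ n + 2 * rsum (fun h => gam (S h) * rsum (fun s => a s * a (s + S h)%nat) (S n - S h)) (S n)) / S_ n -
        (gam 0%nat + 2 * rsum (fun h => gam (S h)) (S n))))
        with (- (2 * rsum (fun h => gam (S h) * w (S n) h) (S n))).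
      2:{ assert (E : rsum (fun h => gam (S h) * w (S n) h) (S n) =
                 rsum (fun h => gam (S h)) (S n) - / S_ n * rsum (fun h => gam (S h) * rsum (fun s => a s * a (s + S h)%nat) (S n - S h)) (S n)).
          { rewrite <- rsum_scal, <- rsum_minus. apply rsum_ext. intros k _. unfold w, P; simpl pred. fold (S_ n). field. lra. }
          rewrite E. field. lra. }
      rewrite Rabs_Ropp, Rabs_mult, (Rabs_right 2) by lra.
      apply Rmult_le_compat_l; [lra|]. eapply Rle_trans; [apply rsum_abs|].
      apply rsum_le. intros k _. rewrite Rabs_mult. rewrite (Rabs_right (w (S n) k)); [lra|]. apply Rle_ge, Hw.
    - replace (Finite 0) with (Finite (2 * 0)) by (f_equal; ring).
      apply (is_lim_seq_scal_l _ 2 0). exact HT. }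
  apply is_lim_seq_incr_1 in HOm.
  pose proof (is_lim_seq_plus' _ _ _ _ HOm Herr) as H. rewrite Rplus_0_r in H.
  revert H. apply is_lim_seq_ext. intros n. fold (S_ n). ring.
Qed.

Theorem proposition1
  (d mu : R) (Hd : 0 < d < 1/2)
  (c : nat -> R) (sigma2 : R)
  (Hc0 : c 0%nat = 1)
  (Habs : exists l, infinite_sum (fun j => Rabs (c j)) l)
  (c1 : R) (Hc1 : infinite_sum c c1) (Hc1nz : c1 <> 0)
  (Hsigma : 0 < sigma2)
  (gam : nat -> R) (Hgam : is_autocov c sigma2 gam)
  (G : R) (HG : is_Gamma (d + 1) G) :
  let omega2 := sigma2 * c1 ^ 2 in
  Un_cv (fun T => Rpower (INR T) (1 - 2 * d) * rv_var gam T (muhat d mu T))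
        (omega2 * (1 - 2 * d) * (PI * d) ^ 2 / (G ^ 2 * (sin (PI * d)) ^ 2)).
Proof.
  intros omega2. apply is_lim_seq_Reals.
  set (a := fun k => r_t d (S k)).
  assert (Ha : forall k, 0 <= a k <= 1).
  { intros k. unfold a. rewrite r_t_pp. pose proof (pp_pos d k ltac:(lra)). pose proof (pp_le1 d k ltac:(lra)). lra. }
  assert (Hdec : forall k, a (S k) <= a k).
  { intros k. unfold a. rewrite !r_t_pp. apply pp_decr. lra. }
  set (al := 1 - 2 * d).
  set (E := sin (PI * d) / (PI * d)).
  assert (HGp : 0 < G) by (apply (G_pos d); auto).
  assert (Hsin : 0 < sin (PI * d)) by (pose proof PI_RGT_0; apply sin_gt_0; nra).
  assert (HPd : 0 < PI * d) by (pose proof PI_RGT_0; nra).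
  assert (HE : 0 < E) by (unfold E; apply Rdiv_lt_0_compat; auto).
  set (Lc := (E * G) ^ 2 / al).
  assert (HLc : 0 < Lc) by (unfold Lc, al; apply Rdiv_lt_0_compat; [apply pow_lt; nra | lra]).
  pose proof (S_lim d G Hd HG) as HS. fold al E in HS. fold Lc in HS.
  apply is_lim_seq_incr_1 in HS.
  assert (HSS : forall n, SS d (S n) = rsum (fun s => a s ^ 2) (S n)) by reflexivity.
  assert (Hpos : forall n, 0 < rsum (fun s => a s ^ 2) (S n)).
  { intros n. change (rsum (fun s => a s ^ 2) (S n)) with (rsum (fun s => a s ^ 2) n + a n ^ 2).
    pose proof (rsum_nonneg (fun s => a s ^ 2) n (fun k _ => pow2_ge_0 (a k))).
    assert (0 < a n) by (unfold a; rewrite r_t_pp; apply pp_pos; lra).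
    pose proof (pow_lt _ 2 H0). lra. }
  assert (HRp : is_lim_seq (fun n => / Rpower (INR (S n)) al) 0).
  { pose proof (is_lim_seq_inv _ _ (Rpower_INR_inf al ltac:(unfold al; lra)) ltac:(discriminate)). exact H. }
  assert (Hinv : is_lim_seq (fun n => / rsum (fun s => a s ^ 2) (S n)) 0).
  { pose proof (is_lim_seq_inv _ _ HS ltac:(intro Z; injection Z; lra)) as H1. cbn [Rbar_inv] in H1.
    pose proof (is_lim_seq_mult' _ _ _ _ H1 HRp) as H2. rewrite Rmult_0_r in H2.
    revert H2. apply is_lim_seq_ext. intros n.
    pose proof (Rpower_pos (INR (S n)) al). pose proof (Hpos n).
    change (rsum (fun t => r_t d (S t) ^ 2) (S n)) with (rsum (fun s => a s ^ 2) (S n)).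
    field. lra. }
  destruct (gam_abs_sum c sigma2 gam Hsigma Hgam Habs) as [Ag HAg].
  pose proof (omega_lim c sigma2 gam c1 Hsigma Hgam Habs Hc1) as HOm.
  pose proof (QS_lim a gam _ Ag Ha Hdec Hpos Hinv HAg HOm) as HQ.
  pose proof (is_lim_seq_div' _ _ _ _ HQ HS ltac:(lra)) as H.
  apply is_lim_seq_incr_1.
  match goal with |- is_lim_seq _ (Finite ?X) => replace X with (sigma2 * c1 ^ 2 / Lc) end.
  2:{ unfold Lc, E, al, omega2. pose proof PI_RGT_0. field. repeat split; try lra. }
  revert H. apply is_lim_seq_ext. intros n.
  rewrite var_muhat. fold a. rewrite HSS.
  change (rsum (fun t => r_t d (S t) ^ 2) (S n)) with (rsum (fun s => a s ^ 2) (S n)).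
  pose proof (Rpower_pos (INR (S n)) al). pose proof (Hpos n).
  fold al. field. lra.
Qed.
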